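(* Let $K$ be a Kripke structure with states $s$ and $t$, and let $D(K)$ be its deadlock extension. Then $s\leftrightarrow_b^{\Delta}t$ within $K$ if and only if $s\leftrightarrow_b^{\Delta}t$ within $D(K)$.
   Context: Fix a set $\mathbf{AP}$ of atomic propositions. A Kripke structure is a triple $K=(S,L,\to)$ with $S$ a set of states, $L:S\to\mathcal{P}(\mathbf{AP})$ and $\to\subseteq S\times S$ (not required to be total); a deadlock state is a state without successors. A finite path from $s$ is a sequence $s_0,\dots,s_n$ with $s_0=s$ and $s_k\to s_{k+1}$ for $0\le k<n$; an infinite path is defined analogously. A colouring is a function $\mathcal{C}$ from the set of states into an arbitrary set of colours. For a path $\pi=s_0,s_1,\dots$, $\mathcal{C}(\pi)$ is obtained from $\mathcal{C}(s_0),\mathcal{C}(s_1),\dots$ by contracting every maximal (finite or infinite) block of consecutive equal colours to a single colour. The $\mathcal{C}(\pi)$ with $\pi$ a path from $s$ are the $\mathcal{C}$-coloured traces of $s$; $\mathcal{C}(\pi)$ is a divergent $\mathcal{C}$-coloured trace of $s$ if $\pi$ is an infinite path from $s$ and $\mathcal{C}(\pi)$ is finite. A colouring is consistent if any two states of the same colour have the same label and the same $\mathcal{C}$-coloured traces; a consistent colouring preserves divergence if any two states of the same colour have the same divergent $\mathcal{C}$-coloured traces. In a Kripke structure, $s\leftrightarrow_b^{\Delta}t$ iff there is a consistent, divergence preserving colouring $\mathcal{C}$ of its states with $\mathcal{C}(s)=\mathcal{C}(t)$. The deadlock extension $D(K)$ of $K$ is obtained from $K$ by adding a fresh state $s_\delta$,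 labelled $\{\delta\}$ for a fresh atomic proposition $\delta\notin\mathbf{AP}$, together with a transition $s_\delta\to s_\delta$ and a transition $u\to s_\delta$ for every deadlock state $u$ of $K$. *)

(* Defs.v *)
From Stdlib Require Import List.
Set Implicit Arguments.

(* A Kripke structure over atomic propositions AP: states, labelling
   (a set of atomic propositions, as a predicate), transition relation
   (not required to be total). *)
Record kripke (AP : Type) := Kripke {
  st : Type;
  lab : st -> AP -> Prop;
  trans : st -> st -> Prop
}.
Arguments st {AP} k.
Arguments lab {AP} k _ _.
Arguments trans {AP} k _ _.

(* Index domains: [Some n] = {0,...,n} (finite path s_0..s_n),
   [None] = all of nat (infinite path). *)
Definition in_dom (d : option nat) (k : nat) : Prop :=
  match d with Some n => k <= n | None => True end.

Definition is_path {AP} (K : kripke AP) (d : option nat) (p : nat -> st K) : Prop :=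
  forall k, in_dom d (S k) -> trans K (p k) (p (S k)).

Inductive trace (Col : Type) : Type :=
| TFin : list Col -> trace Col
| TInf : (nat -> Col) -> trace Col.
Arguments TFin {Col} _.
Arguments TInf {Col} _.

Definition tr_at {Col} (tr : trace Col) (j : nat) (x : Col) : Prop :=
  match tr with
  | TFin l => nth_error l j = Some x
  | TInf h => h j = x
  end.

Definition tr_dom {Col} (tr : trace Col) (j : nat) : Prop :=
  match tr with
  | TFin l => j < length l
  | TInf _ => True
  end.

(* [contraction d g tr]: tr is obtained from the colour sequence g
   (on domain d) by contracting every maximal block of consecutive equal
   colours to a single colour. *)
Definition contraction {Col} (d : option nat) (g : nat -> Col) (tr : trace Col) : Prop :=
  exists b : nat -> nat,
    b 0 = 0 /\
    (forall k, in_dom d (S k) -> b (S k) = b k \/ b (S k) = S (b k)) /\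
    (forall k, in_dom d k -> tr_at tr (b k) (g k)) /\
    (forall j, tr_dom tr j -> exists k, in_dom d k /\ b k = j) /\
    (forall j x y, tr_at tr j x -> tr_at tr (S j) y -> x <> y).

Definition ctrace {AP} (K : kripke AP) {Col} (C : st K -> Col) (s : st K)
    (tr : trace Col) : Prop :=
  exists (d : option nat) (p : nat -> st K),
    p 0 = s /\ is_path K d p /\ contraction d (fun k => C (p k)) tr.

Definition div_ctrace {AP} (K : kripke AP) {Col} (C : st K -> Col) (s : st K)
    (tr : trace Col) : Prop :=
  exists p : nat -> st K,
    p 0 = s /\ is_path K None p /\ contraction None (fun k => C (p k)) tr /\
    exists l, tr = TFin l.

Definition consistent {AP} (K : kripke AP) {Col} (C : st K -> Col) : Prop :=
  forall s t, C s = C t ->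
    (forall a, lab K s a <-> lab K t a) /\
    (forall tr, ctrace K C s tr <-> ctrace K C t tr).

Definition div_preserving {AP} (K : kripke AP) {Col} (C : st K -> Col) : Prop :=
  forall s t, C s = C t ->
    forall tr, div_ctrace K C s tr <-> div_ctrace K C t tr.

Definition bbisim_div {AP} (K : kripke AP) (s t : st K) : Prop :=
  exists (Col : Type) (C : st K -> Col),
    consistent K C /\ div_preserving K C /\ C s = C t.

Definition deadlock {AP} (K : kripke AP) (u : st K) : Prop :=
  forall v, ~ trans K u v.

(* Deadlock extension D(K): states option (st K), None = s_delta;
   atomic propositions option AP, None = the fresh proposition delta. *)
Definition dext_lab {AP} (K : kripke AP) (x : option (st K)) (a : option AP) : Prop :=
  match x, a with
  | Some s, Some a' => lab K s a'
  | Some _, None => False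
  | None, None => True
  | None, Some _ => False
  end.

Definition dext_trans {AP} (K : kripke AP) (x y : option (st K)) : Prop :=
  match x, y with
  | Some u, Some v => trans K u v
  | Some u, None => deadlock K u
  | None, None => True
  | None, Some _ => False
  end.

Definition Dext {AP} (K : kripke AP) : kripke (option AP) :=
  @Kripke (option AP) (option (st K)) (dext_lab K) (dext_trans K).

(* Main.v *)
Require Import Defs.
From Stdlib Require Import List Lia Arith Classical ClassicalEpsilon FunctionalExtensionality.
Import ListNotations.
Set Implicit Arguments.

Definition cw {Col} (d : option nat) (g : nat -> Col) (tr : trace Col) (b : nat -> nat) : Prop :=
    b 0 = 0 /\
    (forall k, in_dom d (S k) -> b (S k) = b k \/ b (S k) = S (b k)) /\
    (forall k, in_dom d k -> tr_at tr (b k) (g k)) /\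
    (forall j, tr_dom tr j -> exists k, in_dom d k /\ b k = j) /\
    (forall j x y, tr_at tr j x -> tr_at tr (S j) y -> x <> y).

Ltac split5 := split; [|split; [|split; [|split]]].

Lemma contr_cw {Col} d (g : nat -> Col) tr : contraction d g tr <-> exists b, cw d g tr b.
Proof. reflexivity. Qed.

Lemma in_dom_0 d : in_dom d 0.
Proof. destruct d; simpl; lia. Qed.

Lemma in_dom_le d k k' : in_dom d k -> k' <= k -> in_dom d k'.
Proof. destruct d; simpl; lia. Qed.

Lemma tr_at_det {Col} (tr : trace Col) j x y : tr_at tr j x -> tr_at tr j y -> x = y.
Proof. destruct tr; simpl; intros H1 H2; congruence. Qed.

Lemma tr_at_dom {Col} (tr : trace Col) j x : tr_at tr j x -> tr_dom tr j.
Proof. destruct tr; simpl; auto. intros H. apply nth_error_Some. congruence. Qed.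

Section CW.
Context {Col : Type}.
Implicit Types (g : nat -> Col) (tr : trace Col).

Lemma cw_mono d g tr b : cw d g tr b -> forall k, in_dom d k -> forall k', k' <= k -> b k' <= b k.
Proof.
  intros (H0 & Hs & Ha & Hsu & Hdi). induction k; intros Hk k' Hle.
  - assert (k' = 0) by lia. subst. lia.
  - destruct (Nat.eq_dec k' (S k)). subst; lia.
    assert (b k' <= b k) by (apply IHk; [eapply in_dom_le; eauto | lia]).
    destruct (Hs k Hk); lia.
Qed.

Lemma cw_ext d g g' tr b : cw d g tr b -> (forall k, in_dom d k -> g k = g' k) -> cw d g' tr b.
Proof.
  intros (H0 & Hs & Ha & Hsu & Hdi) He. split5; auto.
  intros k Hk. rewrite <- He by auto. auto.
Qed.

Lemma cw_values d g tr b j x : cw d g tr b -> tr_at tr j x -> exists k, in_dom d k /\ g k = x.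
Proof.
  intros (H0 & Hs & Ha & Hsu & Hdi) Hx.
  destruct (Hsu j (tr_at_dom _ _ _ Hx)) as [k [Hk Hb]]. exists k. split; auto.
  subst. eapply tr_at_det; eauto.
Qed.

Lemma cw_ivt d g tr b n : cw d g tr b -> in_dom d n -> forall j, j <= b n -> exists k, k <= n /\ b k = j.
Proof.
  intros Hc. pose proof Hc as (H0 & Hs & Ha & Hsu & Hdi). induction n; intros Hn j Hj.
  - exists 0. lia.
  - destruct (le_lt_dec j (b n)).
    + destruct (IHn (in_dom_le _ Hn (le_S _ _ (le_n n))) j l) as [k [? ?]]. exists k; split; auto; lia.
    + exists (S n). destruct (Hs n Hn); lia.
Qed.

Lemma cw_last n g l b : cw (Some n) g (TFin l) b -> length l = S (b n).
Proof.
  intros Hc. pose proof Hc as (H0 & Hs & Ha & Hsu & Hdi).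
  assert (b n < length l).
  { specialize (Ha n (le_n n)). simpl in Ha. apply nth_error_Some. congruence. }
  assert (length l - 1 <= b n).
  { destruct (Hsu (length l - 1)) as [k [Hk Hb]]. simpl. lia.
    pose proof (cw_mono Hc (d:=Some n) (k:=n) (le_n n) Hk). lia. }
  lia.
Qed.

Lemma cw_restrict d g l b n : cw d g (TFin l) b -> in_dom d n -> length l = S (b n) ->
  cw (Some n) g (TFin l) b.
Proof.
  intros Hc Hn Hl. pose proof Hc as (H0 & Hs & Ha & Hsu & Hdi).
  split5.
  - auto.
  - intros k Hk. apply Hs. eapply in_dom_le; eauto.
  - intros k Hk. apply Ha. eapply in_dom_le; eauto.
  - intros j Hj. simpl in Hj. assert (Hjb : j <= b n) by lia. destruct (cw_ivt n Hc Hn Hjb) as [k [? ?]].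
    exists k. simpl. auto.
  - auto.
Qed.

Lemma cw_extend n d g tr b : cw (Some n) g tr b -> in_dom d n ->
  (forall k, n <= k -> in_dom d k -> g k = g n) ->
  cw d g tr (fun k => if k <=? n then b k else b n).
Proof.
  intros (H0 & Hs & Ha & Hsu & Hdi) Hn He. split5; [| | | |auto].
  - simpl. auto.
  - intros k Hk. destruct (S k <=? n) eqn:E1.
    + apply Nat.leb_le in E1. assert (E2 : (k <=? n) = true) by (apply Nat.leb_le; lia).
      rewrite E2. apply Hs. simpl. lia.
    + apply Nat.leb_nle in E1. destruct (k <=? n) eqn:E2.
      * apply Nat.leb_le in E2. assert (k = n) by lia. subst. auto.
      * auto.
  - intros k Hk. destruct (k <=? n) eqn:E.
    + apply Nat.leb_le in E. apply Ha. simpl. auto.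
    + apply Nat.leb_nle in E. rewrite He by (auto; lia). apply Ha. simpl; auto.
  - intros j Hj. destruct (Hsu j Hj) as [k [Hk Hb]]. simpl in Hk. exists k. split.
    eapply in_dom_le; eauto. assert (E : (k <=? n) = true) by (apply Nat.leb_le; lia). rewrite E. auto.
Qed.

Lemma cw_const d g c : (forall k, in_dom d k -> g k = c) -> cw d g (TFin [c]) (fun _ => 0).
Proof.
  intros He. split5.
  - auto.
  - auto.
  - intros k Hk. simpl. rewrite He; auto.
  - intros j Hj. simpl in Hj. exists 0. split. apply in_dom_0. lia.
  - intros j x y H1 H2. simpl in H2. destruct j; simpl in H2; [discriminate|destruct j; discriminate].
Qed.

Lemma cw_join n g l b z : cw (Some n) g (TFin l) b -> g (S n) = z ->
  (forall k, k <= n -> g k <> z) ->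
  cw (Some (S n)) g (TFin (l ++ [z])) (fun k => if k <=? n then b k else S (b n)).
Proof.
  intros Hc Hz Hne. pose proof (cw_last Hc) as Hl. pose proof Hc as (H0 & Hs & Ha & Hsu & Hdi).
  split5.
  - simpl. auto.
  - intros k Hk. simpl in Hk. destruct (S k <=? n) eqn:E1.
    + apply Nat.leb_le in E1. assert (E2 : (k <=? n) = true) by (apply Nat.leb_le; lia).
      rewrite E2. apply Hs. simpl. lia.
    + apply Nat.leb_nle in E1. assert (E2 : (k <=? n) = true) by (apply Nat.leb_le; lia).
      rewrite E2. assert (k = n) by lia. subst. right. reflexivity.
  - intros k Hk. simpl in Hk. destruct (k <=? n) eqn:E.
    + apply Nat.leb_le in E. simpl. rewrite nth_error_app1.
      apply (Ha k E). pose proof (cw_mono Hc (d:=Some n) (k:=n) (le_n n) E). lia.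
    + apply Nat.leb_nle in E. assert (k = S n) by lia. subst k. unfold tr_at.
      rewrite nth_error_app2 by lia. rewrite <- Hl, Nat.sub_diag. simpl. congruence.
  - intros j Hj. simpl in Hj. rewrite length_app in Hj. simpl in Hj.
    destruct (lt_dec j (length l)).
    + destruct (Hsu j l0) as [k [Hk Hb]]. simpl in Hk. exists k. split. simpl; lia.
      assert (E : (k <=? n) = true) by (apply Nat.leb_le; lia). rewrite E. auto.
    + exists (S n). split. simpl; lia.
      assert (E : (S n <=? n) = false) by (apply Nat.leb_nle; lia). rewrite E. lia.
  - intros j x y H1 H2. unfold tr_at in H1, H2.
    assert (Hj : S j < length (l ++ [z])) by (apply nth_error_Some; congruence).
    rewrite length_app in Hj. simpl in Hj.
    destruct (lt_dec (S j) (length l)).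
    + rewrite nth_error_app1 in H1 by lia. rewrite nth_error_app1 in H2 by lia.
      eapply Hdi; eauto.
    + assert (H3 : S j = length l) by lia.
      rewrite nth_error_app1 in H1 by lia.
      rewrite nth_error_app2 in H2 by lia. rewrite H3, Nat.sub_diag in H2. simpl in H2.
      assert (j = b n) by lia. subst j.
      specialize (Ha n (le_n n)). unfold tr_at in Ha. rewrite Ha in H1. injection H1 as <-.
      injection H2 as <-. apply Hne. lia.
Qed.

Lemma cw_split d g tr b n z : cw d g tr b -> in_dom d (S n) ->
  (forall k, k <= n -> g k <> z) -> (forall k, S n <= k -> in_dom d k -> g k = z) ->
  exists l, tr = TFin (l ++ [z]) /\ cw (Some n) g (TFin l) b.
Proof.
  intros Hc Hn Hne Hz. pose proof Hc as (H0 & Hs & Ha & Hsu & Hdi).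
  assert (Hn' : in_dom d n) by (eapply in_dom_le; eauto).
  assert (HbS : b (S n) = S (b n)).
  { destruct (Hs n Hn) as [H|H]; auto. exfalso. apply (Hne n (le_n n)).
    eapply tr_at_det. apply (Ha n Hn'). rewrite <- H. rewrite <- (Hz (S n) (le_n _) Hn). apply Ha; auto. }
  assert (Htail : forall i, in_dom d (S n + i) -> b (S n + i) = S (b n)).
  { induction i; intros Hi. rewrite Nat.add_0_r; auto.
    rewrite Nat.add_succ_r in Hi |- *.
    assert (Hi' : in_dom d (S n + i)) by (eapply in_dom_le; eauto).
    destruct (Hs _ Hi) as [E|E]. rewrite E; auto.
    exfalso. apply (Hdi (b (S n + i)) z z); [| |reflexivity].
    - rewrite <- (Hz (S n + i)) by (auto; lia). apply Ha; auto.
    - rewrite <- E. rewrite <- (Hz (S (S n + i))) by (auto; lia). apply Ha; auto. }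
  assert (Hpos : forall j, tr_dom tr j -> j <= S (b n)).
  { intros j Hj. destruct (Hsu j Hj) as [k [Hk Hb]]. subst j.
    destruct (le_lt_dec k n).
    - pose proof (cw_mono Hc Hn' l). lia.
    - replace k with (S n + (k - S n)) by lia. rewrite Htail. lia.
      replace (S n + (k - S n)) with k by lia. auto. }
  assert (HatS : tr_at tr (S (b n)) z).
  { rewrite <- HbS. rewrite <- (Hz (S n) (le_n _) Hn). apply Ha; auto. }
  destruct tr as [L|f].
  - assert (HL : length L = S (S (b n))).
    { assert (S (b n) < length L) by (unfold tr_at in HatS; apply nth_error_Some; congruence).
      destruct (le_lt_dec (length L) (S (S (b n)))). lia.
      specialize (Hpos (S (S (b n)))). simpl in Hpos. lia. }
    destruct L as [|a0 L0] eqn:EL. simpl in HL; discriminate.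
    rewrite <- EL in *. assert (L <> []) by (rewrite EL; discriminate).
    destruct (exists_last H) as [l [a Ela]]. rewrite Ela in *.
    rewrite length_app in HL; simpl in HL.
    assert (a = z).
    { unfold tr_at in HatS. rewrite nth_error_app2 in HatS by lia.
      replace (S (b n) - length l) with 0 in HatS by lia. simpl in HatS. congruence. }
    subst a. exists l. split; auto.
    split5.
    + auto.
    + intros k Hk. apply Hs. eapply in_dom_le; eauto.
    + intros k Hk. simpl in Hk. pose proof (Ha k (in_dom_le _ Hn' Hk)). unfold tr_at in H1 |- *.
      rewrite nth_error_app1 in H1; auto. pose proof (cw_mono Hc Hn' Hk). lia.
    + intros j Hj. simpl in Hj. destruct (Hsu j) as [k [Hk Hb]]. simpl. rewrite length_app; simpl; lia.
      exists k. split; auto. simpl. destruct (le_lt_dec k n); auto.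
      exfalso. replace k with (S n + (k - S n)) in Hb by lia. rewrite Htail in Hb. lia.
      replace (S n + (k - S n)) with k by lia. auto.
    + intros j x y H1 H2. unfold tr_at in H1, H2.
      assert (S j < length l) by (apply nth_error_Some; congruence).
      apply (Hdi j); unfold tr_at; rewrite nth_error_app1; auto; lia.
  - exfalso. specialize (Hpos (S (S (b n))) I). lia.
Qed.

End CW.

Definition tmap {A B} (h : A -> B) (tr : trace A) : trace B :=
  match tr with TFin l => TFin (map h l) | TInf f => TInf (fun j => h (f j)) end.

Lemma tr_at_tmap {A B} (h : A -> B) tr j x : tr_at (tmap h tr) j x <-> exists y, tr_at tr j y /\ x = h y.
Proof.
  destruct tr; simpl.
  - rewrite nth_error_map. destruct (nth_error l j); simpl; split.
    + intros E; injection E; eauto.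
    + intros [y [E ->]]. congruence.
    + discriminate.
    + intros [y [E _]]; discriminate.
  - split. intros <-; eauto. intros [y [-> ->]]; auto.
Qed.

Lemma tr_dom_tmap {A B} (h : A -> B) tr j : tr_dom (tmap h tr) j <-> tr_dom tr j.
Proof. destruct tr; simpl; try rewrite length_map; tauto. Qed.



Lemma cw_map {A B} d (g : nat -> A) tr b (h : A -> B) : cw d g tr b ->
  (forall k1 k2, in_dom d k1 -> in_dom d k2 -> h (g k1) = h (g k2) -> g k1 = g k2) ->
  cw d (fun k => h (g k)) (tmap h tr) b.
Proof.
  intros Hc Hi. pose proof Hc as (H0 & Hs & Ha & Hsu & Hdi). split5.
  - auto.
  - auto.
  - intros k Hk. apply tr_at_tmap. eauto.
  - intros j Hj. apply tr_dom_tmap in Hj. auto.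
  - intros j x y H1 H2. apply tr_at_tmap in H1 as [x' [H1 ->]]. apply tr_at_tmap in H2 as [y' [H2 ->]].
    intros E. destruct (cw_values _ _ Hc H1) as [k1 [Hk1 E1]]. destruct (cw_values _ _ Hc H2) as [k2 [Hk2 E2]].
    subst. apply (Hdi _ _ _ H1 H2). apply Hi; auto.
Qed.

Lemma tmap_back {A B} (h : A -> B) (h' : B -> A) tr :
  (forall j x, tr_at tr j x -> h' (h x) = x) -> tmap h' (tmap h tr) = tr.
Proof.
  destruct tr as [l|f]; simpl; intros H.
  - f_equal. rewrite map_map. rewrite <- (map_id l) at 2. apply map_ext_in.
    intros a Ha. apply In_nth_error in Ha as [j Hj]. eapply H; eauto.
  - f_equal. apply functional_extensionality. intros j. eapply H; eauto.
Qed.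

Section KL.
Context {AP : Type} (K : kripke AP) {Col : Type} (C : st K -> Col).

Lemma path_restrict d p n : is_path K d p -> in_dom d n -> is_path K (Some n) p.
Proof. intros Hp Hn k Hk. apply Hp. eapply in_dom_le; eauto. Qed.

Lemma dead_dom w d p : deadlock K w -> p 0 = w -> is_path K d p -> d = Some 0.
Proof.
  intros Hw H0 Hp. destruct d as [[|n]|]; auto; exfalso; apply (Hw (p 1)); rewrite <- H0; apply Hp; simpl; lia || auto.
Qed.

Lemma dead_no2 w a a' : deadlock K w -> ctrace K C w (TFin [a; a']) -> False.
Proof.
  intros Hw [d [p [H0 [Hp [bb Hc]]]]]. pose proof (dead_dom Hw H0 Hp). subst d.
  destruct Hc as (Hb0 & _ & _ & Hsu & _). destruct (Hsu 1) as [k [Hk Hb]]. simpl; lia.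
  simpl in Hk. assert (k = 0) by lia. subst. congruence.
Qed.

Lemma reach_deadlock (Hc : consistent K C) (Hd : div_preserving K C) w w1 :
  deadlock K w -> C w1 = C w ->
  exists e r, r 0 = w1 /\ is_path K (Some e) r /\ (forall i, i <= e -> C (r i) = C w) /\ deadlock K (r e).
Proof.
  intros Hw H1. apply NNPP. intros Hno.
  set (R := fun x => exists e r, r 0 = w1 /\ is_path K (Some e) r /\ (forall i, i <= e -> C (r i) = C w) /\ r e = x).
  assert (HR : forall x, R x -> exists y, trans K x y /\ R y).
  { intros x [e [r [Hr0 [Hrp [Hrc Hre]]]]].
    assert (exists y, trans K x y) as [y Hy].
    { apply NNPP. intros Hn. apply Hno. exists e, r. split; [auto|split; [auto|split; [auto|]]].
      intros v Hv. subst x. apply Hn; eauto. }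
    set (r' := fun i => if i <=? e then r i else y).
    assert (Hr'p : is_path K (Some (S e)) r').
    { intros i Hi. simpl in Hi. unfold r'. destruct (S i <=? e) eqn:E1.
      - apply Nat.leb_le in E1. rewrite (proj2 (Nat.leb_le i e)) by lia. apply Hrp. simpl; lia.
      - apply Nat.leb_nle in E1. assert (i = e) by lia. subst i. rewrite Nat.leb_refl. subst x; auto. }
    assert (Hr'0 : r' 0 = w1) by (unfold r'; simpl; auto).
    assert (Hr'S : r' (S e) = y) by (unfold r'; rewrite (proj2 (Nat.leb_nle (S e) e)) by lia; auto).
    assert (Hr'e : forall i, i <= e -> r' i = r i) by (intros i Hi; unfold r'; rewrite (proj2 (Nat.leb_le i e)) by lia; auto).
    assert (Hcy : C y = C w).
    { apply NNPP. intros Hne.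
      assert (Hcw0 : cw (Some e) (fun i => C (r' i)) (TFin [C w]) (fun _ => 0)).
      { apply cw_const. intros i Hi. simpl in Hi. rewrite Hr'e by lia. auto. }
      assert (E1 : (fun i => C (r' i)) (S e) = C y) by (simpl; rewrite Hr'S; auto).
      assert (E2 : forall k, k <= e -> (fun i => C (r' i)) k <> C y).
      { intros k Hk. simpl. rewrite Hr'e by auto. rewrite Hrc by auto. auto. }
      pose proof (@cw_join _ e (fun i => C (r' i)) [C w] (fun _ => 0) (C y) Hcw0 E1 E2) as Hj.
      assert (Ht : ctrace K C w1 (TFin ([C w] ++ [C y]))).
      { exists (Some (S e)), r'. split; auto. split; auto. eexists; exact Hj. }
      apply (proj2 (Hc w1 w H1)) in Ht. simpl in Ht. eapply dead_no2; eauto. }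
    exists y. split. subst x; auto.
    exists (S e), r'. split; auto. split; auto. split; auto.
    intros i Hi. destruct (Nat.eq_dec i (S e)) as [->|Hne]. rewrite Hr'S; auto.
    rewrite Hr'e by lia. apply Hrc. lia. }
  assert (HF : forall x, exists y, R x -> trans K x y /\ R y).
  { intros x. destruct (classic (R x)) as [Hx|Hx].
    destruct (HR x Hx) as [y ?]; exists y; auto. exists x; tauto. }
  set (F := fun x => proj1_sig (constructive_indefinite_description _ (HF x))).
  assert (HFs : forall x, R x -> trans K x (F x) /\ R (F x)).
  { intros x. exact (proj2_sig (constructive_indefinite_description _ (HF x))). }
  set (p := fun k => Nat.iter k F w1).
  assert (Hp : forall k, R (p k)).
  { induction k.
    - exists 0, (fun _ => w1). split; auto. split.
      + intros k Hk. simpl in Hk. lia.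
      + split; auto.
    - simpl. apply HFs. exact IHk. }
  assert (Hdt : div_ctrace K C w1 (TFin [C w])).
  { exists p. split; auto. split.
    - intros k _. apply (HFs (p k) (Hp k)).
    - split; [|eauto]. exists (fun _ => 0). apply cw_const. intros k _.
      destruct (Hp k) as [e [r [_ [_ [Hrc Hre]]]]]. rewrite <- Hre. apply Hrc; auto. }
  apply (proj1 (Hd w1 w H1 _)) in Hdt. destruct Hdt as [pw [Hpw0 [Hpw _]]].
  apply (Hw (pw 1)). rewrite <- Hpw0. apply Hpw. simpl; auto.
Qed.

Lemma core2 (Hc : consistent K C) (Hd : div_preserving K C) u v p n l :
  C u = C v -> p 0 = u -> is_path K (Some n) p -> deadlock K (p n) ->
  contraction (Some n) (fun k => C (p k)) (TFin l) ->
  exists N q, q 0 = v /\ is_path K (Some N) q /\ deadlock K (q N) /\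
    contraction (Some N) (fun k => C (q k)) (TFin l).
Proof.
  intros Huv Hp0 Hp Hpn [bp Hcp].
  assert (Ht : ctrace K C v (TFin l)).
  { apply (proj2 (Hc u v Huv)). exists (Some n), p. split; [auto|split; [auto| eexists; eauto]]. }
  destruct Ht as [d [q [Hq0 [Hq [bq Hcq]]]]].
  pose proof (cw_last Hcp) as Hl.
  pose proof Hcq as (_&_&Haq&Hsu&_). pose proof Hcp as (_&_&Hap&_&_).
  destruct (Hsu (bp n)) as [k [Hk Hbk]]. simpl; lia.
  assert (Hcr : cw (Some k) (fun i => C (q i)) (TFin l) bq) by (eapply cw_restrict; [exact Hcq|exact Hk|lia]).
  assert (Hcol : C (q k) = C (p n)).
  { eapply tr_at_det. apply (Haq k Hk). rewrite Hbk. apply (Hap n (le_n n)). }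
  destruct (reach_deadlock Hc Hd Hpn Hcol) as [e [r [Hr0 [Hrp [Hrc Hre]]]]].
  set (s := fun i => if i <=? k then q i else r (i - k)).
  assert (Hsr : forall i, i <= e -> s (k + i) = r i).
  { intros i Hi. unfold s. destruct (k + i <=? k) eqn:E.
    - apply Nat.leb_le in E. assert (i = 0) by lia. subst. rewrite Nat.add_0_r. auto.
    - f_equal. lia. }
  assert (Hsq : forall i, i <= k -> s i = q i).
  { intros i Hi. unfold s. rewrite (proj2 (Nat.leb_le i k)) by lia. auto. }
  exists (k + e), s. split; [|split; [|split]].
  - rewrite Hsq by lia. auto.
  - intros i Hi. simpl in Hi. destruct (le_lt_dec (S i) k).
    + rewrite !Hsq by lia. apply Hq. eapply in_dom_le; eauto.
    + replace i with (k + (i - k)) by lia. replace (S (k + (i - k))) with (k + S (i - k)) by lia.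
      rewrite !Hsr by lia. apply Hrp. simpl. lia.
  - rewrite Hsr by lia. auto.
  - eexists. apply (cw_extend (n:=k)).
    + apply cw_ext with (g := fun i => C (q i)). exact Hcr. intros i Hi. simpl in Hi. rewrite Hsq; auto.
    + simpl. lia.
    + intros i Hik Hi. simpl in Hi. rewrite (Hsq k) by lia. replace i with (k + (i - k)) by lia.
      rewrite Hsr by lia. rewrite Hrc by lia. auto.
Qed.

End KL.

Definition ounsome {A} (a : A) (o : option A) := match o with Some x => x | None => a end.
Lemma ounsome_eq {A} (a : A) o : o <> None -> o = Some (ounsome a o).
Proof. destruct o; simpl; congruence. Qed.

Lemma least (P : nat -> Prop) n : P n -> exists m, P m /\ forall k, k < m -> ~ P k.
Proof.
  induction n as [n IH] using (well_founded_induction lt_wf). intros Hn.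
  destruct (classic (exists k, k < n /\ P k)) as [[k [Hk Hpk]]|Hno].
  - exact (IH k Hk Hpk).
  - exists n. split; auto. intros k Hk Hpk. apply Hno; eauto.
Qed.

Section DL.
Context {AP : Type} (K : kripke AP).

Lemma dpath_cases d (p' : nat -> option (st K)) u : p' 0 = Some u -> is_path (Dext K) d p' ->
 (forall k, in_dom d k -> p' k <> None) \/
 exists n, in_dom d (S n) /\ (forall k, k <= n -> p' k <> None) /\
   (forall k, S n <= k -> in_dom d k -> p' k = None).
Proof.
  intros H0 Hp. destruct (classic (exists k, in_dom d k /\ p' k = None)) as [[k [Hk Hn]]|Hno].
  - right. destruct (least (fun k => in_dom d k /\ p' k = None) k (conj Hk Hn)) as [m [[Hm Hmn] Hmin]].
    destruct m. congruence. exists m. split; auto. split.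
    + intros i Hi E. apply (Hmin i). lia. split; auto. eapply in_dom_le; eauto.
    + assert (Ht : forall j, in_dom d (S m + j) -> p' (S m + j) = None).
      { induction j; intros Hj. rewrite Nat.add_0_r; auto.
        rewrite Nat.add_succ_r in Hj |- *. pose proof (Hp _ Hj) as Htr.
        rewrite IHj in Htr by (eapply in_dom_le; eauto).
        destruct (p' (S (S m + j))); simpl in Htr; [contradiction|auto]. }
      intros i Hi Hid. replace i with (S m + (i - S m)) by lia. apply Ht.
      replace (S m + (i - S m)) with i by lia. auto.
  - left. intros k Hk E. apply Hno; eauto.
Qed.

Section Fwd.
Context {Col : Type} (C : st K -> Col) (Hc : consistent K C) (Hd : div_preserving K C).

Lemma case2_build u v p n l : C u = C v -> p 0 = u -> is_path K (Some n) p -> deadlock K (p n) ->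
  contraction (Some n) (fun k => Some (C (p k))) (TFin l) ->
  exists N (q' : nat -> option (st K)), q' 0 = Some v /\ is_path (Dext K) None q' /\
    contraction (Some (S N)) (fun k => option_map C (q' k)) (TFin (l ++ [None])) /\
    contraction None (fun k => option_map C (q' k)) (TFin (l ++ [None])).
Proof.
  intros Huv Hp0 Hp Hpn [b Hcb].
  set (h := fun o : option Col => match o with Some c => c | None => C u end).
  pose proof (@cw_map _ _ (Some n) (fun k => Some (C (p k))) (TFin l) b h Hcb) as Hm.
  assert (Hm' : cw (Some n) (fun k => C (p k)) (TFin (map h l)) b).
  { apply Hm. intros k1 k2 _ _ E. simpl in E. congruence. }
  destruct (core2 Hc Hd v Huv Hp0 Hp Hpn (ex_intro _ b Hm')) as [N [q [Hq0 [Hq [Hqd [bq Hcq]]]]]].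
  pose proof (@cw_map _ _ (Some N) (fun k => C (q k)) (TFin (map h l)) bq (@Some Col) Hcq) as Hm2.
  assert (Hm2' : cw (Some N) (fun k => Some (C (q k))) (tmap Some (tmap h (TFin l))) bq).
  { apply Hm2. intros k1 k2 _ _ E. congruence. }
  rewrite tmap_back in Hm2'.
  2:{ intros j x Hx. destruct (cw_values _ _ Hcb Hx) as [k [_ <-]]. reflexivity. }
  set (q' := fun k => if k <=? N then Some (q k) else None).
  assert (Hqq : forall k, k <= N -> q' k = Some (q k)).
  { intros k Hk. unfold q'. rewrite (proj2 (Nat.leb_le k N)) by lia. auto. }
  assert (HqN : forall k, N < k -> q' k = None).
  { intros k Hk. unfold q'. rewrite (proj2 (Nat.leb_nle k N)) by lia. auto. }
  assert (Hcq' : cw (Some N) (fun k => option_map C (q' k)) (TFin l) bq).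
  { apply cw_ext with (g := fun k => Some (C (q k))). exact Hm2'. intros k Hk. simpl in Hk.
    rewrite Hqq; auto. }
  assert (Hj := @cw_join _ N (fun k => option_map C (q' k)) l bq None Hcq'
     ltac:(simpl; rewrite HqN by lia; reflexivity)
     ltac:(intros k Hk; simpl; rewrite Hqq by lia; discriminate)).
  exists N, q'. split; [|split; [|split]].
  - rewrite Hqq by lia. rewrite Hq0. auto.
  - intros k _. destruct (le_lt_dec (S k) N).
    + rewrite !Hqq by lia. apply Hq. simpl; lia.
    + destruct (Nat.eq_dec k N).
      * subst k. rewrite Hqq by lia. rewrite HqN by lia. exact Hqd.
      * rewrite !HqN by lia. simpl. exact I.
  - eexists. exact Hj.
  - eexists. apply (cw_extend (n := S N)). exact Hj. simpl; auto.
    intros k Hk _. simpl. rewrite !HqN by lia. reflexivity.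
Qed.

Lemma fwd_common d u (p' : nat -> option (st K)) tr b :
  p' 0 = Some u -> is_path (Dext K) d p' -> cw d (fun k => option_map C (p' k)) tr b ->
  (exists p h, p 0 = u /\ is_path K d p /\ cw d (fun k => C (p k)) (tmap h tr) b /\ tmap Some (tmap h tr) = tr)
  \/ (exists p n l, p 0 = u /\ is_path K (Some n) p /\ deadlock K (p n) /\
        contraction (Some n) (fun k => Some (C (p k))) (TFin l) /\ tr = TFin (l ++ [None])).
Proof.
  intros H0 Hp Hcb.
  set (p := fun k => ounsome u (p' k)).
  assert (Hp0 : p 0 = u) by (unfold p; rewrite H0; auto).
  set (h := fun o : option Col => match o with Some c => c | None => C u end).
  destruct (dpath_cases H0 Hp) as [Hall | [n [Hn [Hpre Hpost]]]].
  - left. assert (Hpp : forall k, in_dom d k -> p' k = Some (p k)) by (intros; apply ounsome_eq; auto).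
    assert (HpK : is_path K d p).
    { intros k Hk. pose proof (Hp k Hk) as Ht. rewrite !Hpp in Ht by (auto; eapply in_dom_le; eauto). exact Ht. }
    assert (Hcb' : cw d (fun k => Some (C (p k))) tr b).
    { apply cw_ext with (g := fun k => option_map C (p' k)). exact Hcb. intros k Hk. rewrite Hpp; auto. }
    exists p, h. split; [auto|split; [auto|split]].
    + apply (@cw_map _ _ d (fun k => Some (C (p k))) tr b h Hcb'). intros k1 k2 _ _ E. simpl in E. congruence.
    + apply tmap_back. intros j x Hx. destruct (cw_values _ _ Hcb' Hx) as [k [_ <-]]. reflexivity.
  - right. assert (Hpp : forall k, k <= n -> p' k = Some (p k)) by (intros; apply ounsome_eq; auto).
    assert (HpK : is_path K (Some n) p).
    { intros k Hk. simpl in Hk. assert (Hd1 : in_dom d (S k)) by (eapply in_dom_le; [exact Hn|lia]). pose proof (Hp k Hd1) as Ht.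
      rewrite !Hpp in Ht by lia. exact Ht. }
    assert (Hpn : deadlock K (p n)).
    { pose proof (Hp n Hn) as Ht. rewrite Hpp in Ht by lia. rewrite Hpost in Ht by (auto; lia). exact Ht. }
    destruct (cw_split (z := None) Hcb Hn) as [l [Htr Hcl]].
    + intros k Hk. simpl. rewrite Hpp by lia. discriminate.
    + intros k Hk Hkd. rewrite Hpost by auto. reflexivity.
    + exists p, n, l. split; [auto|split; [auto|split; [auto|split; [|auto]]]].
      exists b. apply cw_ext with (g := fun k => option_map C (p' k)). exact Hcl.
      intros k Hk. simpl in Hk. rewrite Hpp; auto.
Qed.

Lemma fwd_ctrace u v tr : C u = C v ->
  ctrace (Dext K) (option_map C) (Some u) tr -> ctrace (Dext K) (option_map C) (Some v) tr.
Proof.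
  intros Huv [d [p' [H0 [Hp [b Hcb]]]]].
  destruct (fwd_common H0 Hp Hcb) as [[p [h [Hp0 [HpK [Hm Hback]]]]] | [p [n [l [Hp0 [HpK [Hpn [Hcl Htr]]]]]]]].
  - assert (Ht : ctrace K C u (tmap h tr)) by (exists d, p; split; [auto|split; [auto|eexists; exact Hm]]).
    apply (proj1 (proj2 (@Hc u v Huv) _)) in Ht. destruct Ht as [d2 [q [Hq0 [Hq [b2 Hcq]]]]].
    exists d2, (fun k => Some (q k)). split; [rewrite Hq0; auto|split].
    + intros k Hk. exact (Hq k Hk).
    + rewrite <- Hback. exists b2. apply (@cw_map _ _ d2 (fun k => C (q k)) _ b2 (@Some Col) Hcq).
      intros k1 k2 _ _ E; congruence.
  - destruct (case2_build Huv Hp0 HpK Hpn Hcl) as [N [q' [Hq0 [Hq [Hc1 _]]]]].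
    exists (Some (S N)), q'. subst tr. split; [auto|split; [|auto]].
    intros k _. apply Hq. exact I.
Qed.

Lemma fwd_div u v tr : C u = C v ->
  div_ctrace (Dext K) (option_map C) (Some u) tr -> div_ctrace (Dext K) (option_map C) (Some v) tr.
Proof.
  intros Huv [p' [H0 [Hp [[b Hcb] [l0 Hl0]]]]].
  destruct (fwd_common H0 Hp Hcb) as [[p [h [Hp0 [HpK [Hm Hback]]]]] | [p [n [l [Hp0 [HpK [Hpn [Hcl Htr]]]]]]]].
  - assert (Ht : div_ctrace K C u (tmap h tr)).
    { exists p. split; [auto|split; [auto|split; [eexists; exact Hm|]]]. subst tr. simpl. eauto. }
    apply (proj1 (@Hd u v Huv _)) in Ht. destruct Ht as [q [Hq0 [Hq [[b2 Hcq] _]]]].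
    exists (fun k => Some (q k)). split; [rewrite Hq0; auto|split; [|split]].
    + intros k Hk. exact (Hq k Hk).
    + rewrite <- Hback. exists b2. apply (@cw_map _ _ None (fun k => C (q k)) _ b2 (@Some Col) Hcq).
      intros k1 k2 _ _ E; congruence.
    + eauto.
  - destruct (case2_build Huv Hp0 HpK Hpn Hcl) as [N [q' [Hq0 [Hq [_ Hc2]]]]].
    exists q'. split; [auto|split; [auto|split; [rewrite Htr; exact Hc2|eauto]]].
Qed.

End Fwd.
End DL.

Section Bwd.
Context {AP : Type} (K : kripke AP) {Col : Type} (C' : option (st K) -> Col)
  (Hc' : consistent (Dext K) C').

Lemma noneC x : C' None <> C' (Some x).
Proof.
  intros E. destruct (@Hc' None (Some x) E) as [Hl _]. specialize (Hl None). simpl in Hl. tauto.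
Qed.

Lemma bwd_extract v d (p' : nat -> option (st K)) tr b : p' 0 = Some v -> is_path (Dext K) d p' ->
  cw d (fun k => C' (p' k)) tr b -> (forall j x, tr_at tr j x -> exists y, x = C' (Some y)) ->
  exists q, q 0 = v /\ is_path K d q /\ cw d (fun k => C' (Some (q k))) tr b.
Proof.
  intros H0 Hp Hcb Hval.
  assert (Hnn : forall k, in_dom d k -> p' k <> None).
  { intros k Hk E. pose proof Hcb as (_&_&Ha&_&_). specialize (Ha k Hk). rewrite E in Ha.
    destruct (Hval _ _ Ha) as [y Hy]. exact (noneC Hy). }
  set (q := fun k => ounsome v (p' k)).
  assert (Hpp : forall k, in_dom d k -> p' k = Some (q k)) by (intros; apply ounsome_eq; auto).
  exists q. split; [unfold q; rewrite H0; auto|split].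
  - intros k Hk. pose proof (Hp k Hk) as Ht. rewrite !Hpp in Ht by (auto; eapply in_dom_le; eauto). exact Ht.
  - apply cw_ext with (g := fun k => C' (p' k)). exact Hcb. intros k Hk. rewrite Hpp; auto.
Qed.

Lemma bwd_ctrace u v tr : C' (Some u) = C' (Some v) ->
  ctrace K (fun x => C' (Some x)) u tr -> ctrace K (fun x => C' (Some x)) v tr.
Proof.
  intros E [d [p [H0 [Hp [b Hcb]]]]].
  assert (HD : ctrace (Dext K) C' (Some u) tr).
  { exists d, (fun k => Some (p k)). split; [rewrite H0; auto|split; [|eexists; exact Hcb]].
    intros k Hk. exact (Hp k Hk). }
  apply (proj1 (proj2 (@Hc' _ _ E) _)) in HD. destruct HD as [d2 [p' [H0' [Hp' [b2 Hc2]]]]].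
  destruct (bwd_extract H0' Hp' Hc2) as [q [Hq0 [Hq Hcq]]].
  - intros j x Hx. destruct (cw_values _ _ Hcb Hx) as [k [_ <-]]. eauto.
  - exists d2, q. split; [auto|split; [auto|eexists; exact Hcq]].
Qed.

Lemma bwd_div (Hd' : div_preserving (Dext K) C') u v tr : C' (Some u) = C' (Some v) ->
  div_ctrace K (fun x => C' (Some x)) u tr -> div_ctrace K (fun x => C' (Some x)) v tr.
Proof.
  intros E [p [H0 [Hp [[b Hcb] Hl]]]].
  assert (HD : div_ctrace (Dext K) C' (Some u) tr).
  { exists (fun k => Some (p k)). split; [rewrite H0; auto|split; [|split; [eexists; exact Hcb|exact Hl]]].
    intros k Hk. exact (Hp k Hk). }
  apply (proj1 (@Hd' _ _ E _)) in HD. destruct HD as [p' [H0' [Hp' [[b2 Hc2] _]]]].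
  destruct (bwd_extract H0' Hp' Hc2) as [q [Hq0 [Hq Hcq]]].
  - intros j x Hx. destruct (cw_values _ _ Hcb Hx) as [k [_ <-]]. eauto.
  - exists q. split; [auto|split; [auto|split; [eexists; exact Hcq|exact Hl]]].
Qed.

End Bwd.

Theorem theorem8p2 (AP : Type) (K : kripke AP) (s t : st K) :
  bbisim_div K s t <-> bbisim_div (Dext K) (Some s) (Some t).
Proof.
  split.
  - intros [Col [C [Hc [Hd Hst]]]]. exists (option Col), (option_map C). split; [|split].
    + intros x y Exy. destruct x as [u|], y as [v|]; simpl in Exy; try discriminate.
      * injection Exy as Euv. split.
        -- intros [a|]; simpl; [apply (proj1 (@Hc u v Euv))|tauto].
        -- intros tr. split; apply fwd_ctrace; auto.
      * split; [tauto|tauto].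
    + intros x y Exy. destruct x as [u|], y as [v|]; simpl in Exy; try discriminate.
      * injection Exy as Euv. intros tr. split; apply fwd_div; auto.
      * tauto.
    + simpl. rewrite Hst. auto.
  - intros [Col [C' [Hc [Hd Hst]]]]. exists Col, (fun x => C' (Some x)). split; [|split; auto].
    + intros u v E. split.
      * intros a. exact (proj1 (@Hc (Some u) (Some v) E) (Some a)).
      * intros tr. split; apply bwd_ctrace; auto.
    + intros u v E tr. split; apply bwd_div; auto.
Qed.
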